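(* Let $p\ge 3$ and let $F_p$ be the plane graph defined below, with outer cycle $C = u_0u_1\cdots u_{p-1}u_0$. Then: (a) $F_p$ is $5$-connected; (b) for every vertex $u$ of $F_p$ and every set $M\subseteq V(C)$ with $|M|\le 5$, $F_p$ contains $|M|$ paths from $u$ to the vertices of $M$ (one ending at each vertex of $M$) any two of which share only $u$; (c) for any two sets $M_1, M_2\subseteq V(C)$ with $|M_1|=|M_2|\le 5$, $F_p$ contains $|M_1|$ pairwise vertex-disjoint paths from $M_1$ to $M_2$.
   Context: For $p\ge 3$, $F_p$ is the plane graph constructed as follows. Take a cycle $C = u_0u_1\cdots u_{p-1}u_0$ of length $p$. Inside $C$ add a cycle $C' = v_0v_1\cdots v_{2p-1}v_0$ of length $2p$ and the edges $u_iv_{2i-1}, u_iv_{2i}, u_iv_{2i+1}$ for $i=0,\dots,p-1$ (indices of $u$ taken modulo $p$, indices of $v$ modulo $2p$). Inside $C'$ add a cycle $C''=w_0w_1\cdots w_{2p-1}w_0$ of length $2p$ and edges $v_iw_i, v_iw_{i+1}$ for $i=0,\dots,2p-1$ (indices modulo $2p$). Inside $C''$ add a new vertex $z$ adjacent to every vertex of $C''$. A graph is $k$-connected if it has more than $k$ vertices and remains connected after deleting any fewer than $k$ vertices. *)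

(* Defs.v *)
From mathcomp Require Import all_boot.
Set Implicit Arguments. Unset Strict Implicit. Unset Printing Implicit Defensive.

(* Vertex type of F_p:  u_i (i < p), v_j (j < 2p), w_j (j < 2p), z. *)
Definition Fvert (p : nat) : finType :=
  ((('I_p + 'I_(2 * p)) + 'I_(2 * p)) + unit)%type.

Definition uu {p} (i : 'I_p) : Fvert p := inl (inl (inl i)).
Definition vv {p} (j : 'I_(2 * p)) : Fvert p := inl (inl (inr j)).
Definition ww {p} (j : 'I_(2 * p)) : Fvert p := inl (inr j).
Definition zz {p} : Fvert p := inr tt.

(* one-directional edge list of F_p *)
Definition Fadj0 (p : nat) (a b : Fvert p) : bool :=
  match a, b with
  | inl (inl (inl i)), inl (inl (inl j)) => j == (i + 1) %% p :> nat        (* u_i u_{i+1} *)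
  | inl (inl (inr i)), inl (inl (inr j)) => j == (i + 1) %% (2 * p) :> nat  (* v_i v_{i+1} *)
  | inl (inr i), inl (inr j) => j == (i + 1) %% (2 * p) :> nat              (* w_i w_{i+1} *)
  | inl (inl (inl i)), inl (inl (inr j)) =>                                 (* u_i v_{2i-1}, v_{2i}, v_{2i+1} *)
      [|| j == (2 * i + 2 * p - 1) %% (2 * p) :> nat,
          j == (2 * i) %% (2 * p) :> nat
        | j == (2 * i + 1) %% (2 * p) :> nat]
  | inl (inl (inr i)), inl (inr j) =>                                       (* v_i w_i, v_i w_{i+1} *)
      (j == i :> nat) || (j == (i + 1) %% (2 * p) :> nat)
  | inl (inr _), inr _ => true                                              (* w_j z *)
  | _, _ => false
  end.

Definition Fadj (p : nat) : rel (Fvert p) := fun a b => Fadj0 a b || Fadj0 b a.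

Definition onC {p} (x : Fvert p) : bool :=
  match x with inl (inl (inl _)) => true | _ => false end.

Definition delV (T : finType) (e : rel T) (S : {set T}) : rel T :=
  fun a b => [&& a \notin S, b \notin S & e a b].

Definition k_connected (T : finType) (e : rel T) (k : nat) : Prop :=
  k < #|T| /\
  forall S : {set T}, #|S| < k ->
    forall x y, x \notin S -> y \notin S -> connect (delV e S) x y.

Definition is_path (T : finType) (e : rel T) (x : T) (s : seq T) (y : T) : bool :=
  [&& path e x s, last x s == y & uniq (x :: s)].

(* Main.v *)
Require Import Defs.
From mathcomp Require Import all_boot.
From mathcomp Require Import zify.
From Stdlib Require Import Classical.
Set Implicit Arguments. Unset Strict Implicit. Unset Printing Implicit Defensive.

Section Menger.
Variable T : finType.
Implicit Types (V A B X S W : {set T}) (e : rel T).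

Definition rV V e : rel T := fun a b => [&& a \in V, b \in V & e a b].
Definition ABpath V e A B x s :=
  [&& x \in A, x \in V, path (rV V e) x s, last x s \in B & uniq (x :: s)].
Definition sep V e A B S :=
  forall x s, ABpath V e A B x s -> exists2 y, y \in x :: s & y \in S.
Definition linkage V e A B k := exists A0 : {set T}, exists P : T -> seq T,
  [/\ A0 \subset A, #|A0| = k, (forall a, a \in A0 -> ABpath V e A B a (P a)) &
      (forall a1 a2 y, a1 \in A0 -> a2 \in A0 -> a1 != a2 ->
         y \in a1 :: P a1 -> y \in a2 :: P a2 -> False)].
Definition msr V e := #|V| + #|[set ab : T * T | rV V e ab.1 ab.2]|.

Lemma path_rV_sub V e x s : path (rV V e) x s -> x \in V ->
  forall y, y \in x :: s -> y \in V.
Proof.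
elim: s x => [|z s IH] x /=; first by move=> _ xV y; rewrite mem_seq1 => /eqP->.
move=> /andP[/and3P[_ zV _] pz] xV y; rewrite inE => /orP[/eqP->//|]; exact: IH.
Qed.

Lemma ABpath_in V e A B x s y : ABpath V e A B x s -> y \in x :: s -> y \in V.
Proof. by case/and5P=> _ xV p _ _; apply: (path_rV_sub p xV). Qed.

Lemma connect_rV W e a v : connect (rV W e) a v -> a = v \/ (a \in W /\ v \in W).
Proof.
move/connectP=> [s ps ->]; case: s ps => [|c s] /=; first by left.
move=> /andP[/and3P[aW cW _] pc]; right; split=> //.
by apply: (path_rV_sub pc cW); apply: mem_last.
Qed.

Lemma exists_sub_card B k : k <= #|B| -> exists A0, A0 \subset B /\ #|A0| = k.
Proof.
move=> kB; exists [set x in take k (enum B)]; split.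
  by apply/subsetP=> x; rewrite inE => /mem_take; rewrite mem_enum.
rewrite cardsE (card_uniqP _) ?size_takel -?cardE //.
by apply: take_uniq; apply: enum_uniq.
Qed.

Lemma uniq_card S (s : seq T) : uniq s -> {subset s <= S} -> size s <= #|S|.
Proof. by move=> us sS; rewrite cardE; apply: uniq_leq_size => // x /sS; rewrite mem_enum. Qed.

Lemma sep_B V e A B : sep V e A B B.
Proof. by move=> x s /and5P[_ _ _ lB _]; exists (last x s) => //; apply: mem_last. Qed.

Lemma sep_A V e A B : sep V e A B A.
Proof. by move=> x s /and5P[xA _ _ _ _]; exists x => //; apply: mem_head. Qed.

Lemma ABpath_sub V e e' A B x s : subrel e e' -> ABpath V e A B x s -> ABpath V e' A B x s.
Proof.
move=> ee /and5P[xA xV p lB u]; apply/and5P; split=> //.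
by apply: sub_path p => a b /and3P[aV bV /ee eab]; rewrite /rV aV bV eab.
Qed.

Lemma split_first X (a : T) s : has (fun u => u \in X) (a :: s) ->
  exists t s2, [/\ s = t ++ s2, last a t \in X & all (fun u => u \notin X) (belast a t)].
Proof.
elim: s a => [|c s IH] a /=; first by rewrite orbF => aX; exists [::], [::].
case aX: (a \in X) => /= h; first by exists [::], (c :: s).
have [t [s2 [-> lt bt]]] := IH c h.
by exists (c :: t), s2; split => //=; rewrite aX.
Qed.

Lemma split_last X (a : T) s : has (fun u => u \in X) (a :: s) ->
  exists s1 q t, [/\ a :: s = s1 ++ q :: t, q \in X & all (fun u => u \notin X) t].
Proof.
elim: s a => [|c s IH] a /=; first by rewrite orbF => aX; exists [::], a, [::].
case hcs: (has (fun u => u \in X) (c :: s)).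
  have [s1 [q [t [E qX alt]]]] := IH c hcs.
  by move=> _; exists (a :: s1), q, t; rewrite E.
rewrite /= in hcs; rewrite hcs orbF => aX; exists [::], a, (c :: s); split => //.
by rewrite all_predC /= hcs.
Qed.

Lemma path_split r (a q : T) s s1 t : path r a s -> a :: s = s1 ++ q :: t -> path r q t.
Proof.
case: s1 => [|c s1] /=; first by move=> p [<- <-].
by move=> p [Ea Es]; move: p; rewrite Es Ea cat_path => /andP[_] /= /andP[].
Qed.

Lemma prefix_connect V e X a t : path (rV V e) a t ->
  all (fun u => u \notin X) (belast a t) -> a \in V ->
  forall u, u \in belast a t -> connect (rV (V :\: X) e) a u.
Proof.
elim: t a => [|c t IH] a //= /andP[/and3P[_ cV ac] pc] /andP[aX al] aV u.
rewrite inE => /orP[/eqP->|ub]; first exact: connect0.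
case: t IH pc al ub => [|d t] IH pc al //= ub.
move: al => /= /andP[cX al'].
apply: connect_trans (IH c pc _ cV u ub); last by rewrite /= cX.
by apply: connect1; rewrite /rV !inE aX cX aV cV ac.
Qed.

Lemma path_connect_last r (x : T) s u : path r x s -> u \in x :: s -> connect r u (last x s).
Proof.
elim: s x => [|y s IH] x /=.
  by move=> _; rewrite mem_seq1 => /eqP->; apply: connect0.
move=> /andP[xy py]; rewrite inE => /orP[/eqP->|us].
  by apply: connect_trans (connect1 xy) _; apply: path_connect py _ (mem_last _ _).
exact: IH.
Qed.


Lemma rV_mono W1 W2 e : W1 \subset W2 -> subrel (rV W1 e) (rV W2 e).
Proof. by move=> sW a b /and3P[a1 b1 ab]; rewrite /rV (subsetP sW _ a1) (subsetP sW _ b1). Qed.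

Lemma belast_head (x u : T) t : u \in belast x t -> x \in belast x t.
Proof. by case: t => //= c t _; rewrite inE eqxx. Qed.

Lemma twoedge V e A B S x y k : rV V e x y -> x != y -> x \notin S -> y \notin S ->
  x |: S = A -> y |: S = B -> #|x |: S| = k -> S \subset V -> linkage V e A B k.
Proof.
move=> exy xy xS yS XA YB Xk SV.
exists (x |: S), (fun a => if a == x then [:: y] else [::]); split => //.
- by rewrite XA.
- move=> a; rewrite in_setU1 => /orP[/eqP->|aS].
    rewrite eqxx; apply/and5P; split.
    + by rewrite -XA setU11.
    + by case/and3P: exy.
    + by rewrite /= exy.
    + by rewrite /= -YB setU11.
    + by rewrite /= inE andbT xy.
  have ax : a != x by apply: contraNneq xS => <-.
  rewrite (negbTE ax); apply/and5P; split => //.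
  + by rewrite -XA setU1r.
  + exact: subsetP SV a aS.
  + by rewrite /= -YB setU1r.
- move=> a1 a2 z; rewrite !in_setU1 => /orP[/eqP->|a1S] /orP[/eqP->|a2S] ne;
    rewrite ?eqxx // in ne.
  + have a2x : a2 != x by apply: contraNneq xS => <-.
    rewrite (negbTE a2x) eqxx !inE => /orP[/eqP->|/eqP->] /eqP E.
      by rewrite E a2S in xS.
    by rewrite E a2S in yS.
  + have a1x : a1 != x by apply: contraNneq xS => <-.
    rewrite (negbTE a1x) eqxx !inE => /eqP-> /orP[/eqP E|/eqP E].
      by rewrite -E a1S in xS.
    by rewrite -E a1S in yS.
  + have a1x : a1 != x by apply: contraNneq xS => <-.
    have a2x : a2 != x by apply: contraNneq xS => <-.
    rewrite (negbTE a1x) (negbTE a2x) !mem_seq1 => /eqP-> /eqP E.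
    by rewrite E eqxx in ne.
Qed.


Lemma caseI V e A B X k :
  (forall V' e' A' B', msr V' e' < msr V e -> symmetric e' -> irreflexive e' ->
      A' \subset V' -> B' \subset V' ->
      (forall S, sep V' e' A' B' S -> k <= #|S|) -> linkage V' e' A' B' k) ->
  symmetric e -> irreflexive e -> A \subset V -> B \subset V ->
  (forall S, sep V e A B S -> k <= #|S|) ->
  X \subset V -> #|X| = k -> sep V e A B X -> X != A -> X != B ->
  linkage V e A B k.
Proof.
move=> IH esym eirr AV BV Hk XV Xk sX XA XB.
pose W := V :\: X.
have WV : W \subset V by apply: subsetDl.
pose RA := [set v | [exists a, [&& a \in A, a \in W & connect (rV W e) a v]]].
pose RB := [set v | [exists b, [&& b \in B, b \in W & connect (rV W e) v b]]].
pose VA := X :|: RA. pose VB := X :|: RB.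
have noAB : forall a b, a \in A -> a \in W -> b \in B -> connect (rV W e) a b -> False.
  move=> a b aA aW bB /connectP[s ps Eb].
  move: bB; rewrite Eb; case: (shortenP ps) => s' ps' us' _ lB.
  have hp : ABpath V e A B a s'.
    apply/and5P; split => //; first exact: subsetP AV a aA.
    exact: (sub_path (rV_mono (e:=e) WV) ps').
  have [y yin yX] := sX a s' hp.
  have := path_rV_sub ps' aW yin; by rewrite inE yX.
have RAW : forall v, v \in RA -> v \in W.
  move=> v; rewrite inE => /existsP[a /and3P[_ aW c]].
  by case: (connect_rV c) => [<-|[]].
have RBW : forall v, v \in RB -> v \in W.
  move=> v; rewrite inE => /existsP[b /and3P[_ bW c]].
  by case: (connect_rV c) => [->|[]].
have VAV : VA \subset V.
  apply/subsetP => v; rewrite in_setU => /orP[/(subsetP XV)//|/RAW]; exact: (subsetP WV).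
have VBV : VB \subset V.
  apply/subsetP => v; rewrite in_setU => /orP[/(subsetP XV)//|/RBW]; exact: (subsetP WV).
have AVA : A \subset VA.
  apply/subsetP => a aA; rewrite in_setU; case aX: (a \in X) => //=.
  rewrite inE; apply/existsP; exists a; rewrite aA connect0 andbT /= /W inE aX.
  exact: subsetP AV a aA.
have BVB : B \subset VB.
  apply/subsetP => b bB; rewrite in_setU; case bX: (b \in X) => //=.
  rewrite inE; apply/existsP; exists b; rewrite bB connect0 andbT /= /W inE bX.
  exact: subsetP BV b bB.
have XVA : X \subset VA by apply: subsetUl.
have XVB : X \subset VB by apply: subsetUl.
have cap : forall y, y \in VA -> y \in VB -> y \in X.
  move=> y; rewrite !in_setU; case yX: (y \in X) => //=.
  rewrite !inE => /existsP[a /and3P[aA aW ca]] /existsP[b /and3P[bB bW cb]].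
  exfalso; apply: (noAB a b aA aW bB); exact: connect_trans ca cb.
have [b [bB bX]] : exists b, b \in B /\ b \notin X.
  case: (boolP (B \subset X)) => [BX|/subsetPn[b bB bX]]; last by exists b.
  have := Hk _ (@sep_B V e A B); rewrite -Xk => h.
  have : B == X by rewrite eqEcard BX h.
  by rewrite eq_sym (negbTE XB).
have [a [aA aX]] : exists a, a \in A /\ a \notin X.
  case: (boolP (A \subset X)) => [AX|/subsetPn[a aA aX]]; last by exists a.
  have := Hk _ (@sep_A V e A B); rewrite -Xk => h.
  have : A == X by rewrite eqEcard AX h.
  by rewrite eq_sym (negbTE XA).
have edgeS : forall V', V' \subset V ->
    #|[set ab : T * T | rV V' e ab.1 ab.2]| <= #|[set ab : T * T | rV V e ab.1 ab.2]|.
  move=> V' sV; apply: subset_leq_card; apply/subsetP => ab; rewrite !inE.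
  exact: rV_mono.
have mA : msr VA e < msr V e.
  have h1 := edgeS _ VAV.
  have h2 : #|VA| < #|V|.
    apply: proper_card; apply/properP; split => //; exists b; first exact: subsetP BV b bB.
    rewrite in_setU negb_or bX /=; apply/negP => /[dup] bRA.
    rewrite inE => /existsP[a' /and3P[a'A a'W c]].
    exact: (noAB a' b a'A a'W bB c).
  by rewrite /msr -addSn; apply: leq_add.
have mB : msr VB e < msr V e.
  have h1 := edgeS _ VBV.
  have h2 : #|VB| < #|V|.
    apply: proper_card; apply/properP; split => //; exists a; first exact: subsetP AV a aA.
    rewrite in_setU negb_or aX /=; apply/negP.
    rewrite inE => /existsP[b' /and3P[b'B b'W c]].
    have aW : a \in W by rewrite /W inE aX (subsetP AV a aA).
    exact: (noAB a b' aA aW b'B c).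
  by rewrite /msr -addSn; apply: leq_add.
have sepA : forall S, sep VA e A X S -> k <= #|S|.
  move=> S sS; apply: Hk => x s hp.
  have [y yin yX] := sX x s hp.
  have hasX : has (fun u => u \in X) (x :: s) by apply/hasP; exists y.
  have [t [s2 [Es lt bt]]] := split_first hasX.
  move: hp => /and5P[xA xV px lB ux].
  have pt : path (rV V e) x t by move: px; rewrite Es cat_path => /andP[].
  have ut : uniq (x :: t) by move: ux; rewrite Es -cat_cons cat_uniq => /andP[].
  have allVA : forall u, u \in x :: t -> u \in VA.
    move=> u; rewrite lastI mem_rcons inE => /orP[/eqP->|ub]; first by rewrite in_setU lt.
    have xX : x \notin X := allP bt x (belast_head ub).
    rewrite in_setU; apply/orP; right; rewrite inE; apply/existsP; exists x.
    rewrite xA /W inE xX xV /=; exact: prefix_connect pt bt xV u ub.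
  have hp' : ABpath VA e A X x t.
    apply/and5P; split => //; first exact: allVA x (mem_head _ _).
    apply: (@sub_in_path _ (fun u => u \in VA) (rV V e)) pt.
      by move=> c d cVA dVA /and3P[_ _ cd]; rewrite /rV cVA dVA cd.
    by apply/allP => u; apply: allVA.
  have [y' y'in y'S] := sS x t hp'.
  by exists y' => //; rewrite Es -cat_cons mem_cat y'in.
have sepB : forall S, sep VB e X B S -> k <= #|S|.
  move=> S sS; apply: Hk => x s hp.
  have [y yin yX] := sX x s hp.
  have hasX : has (fun u => u \in X) (x :: s) by apply/hasP; exists y.
  have [s1 [q [t [Es qX alt]]]] := split_last hasX.
  move: hp => /and5P[xA xV px lB ux].
  have pt : path (rV V e) q t := path_split px Es.
  have ut : uniq (q :: t) by move: ux; rewrite Es cat_uniq => /and3P[].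
  have lt : last q t = last x s by rewrite -(last_cons x x s) Es last_cat.
  have qin : q \in x :: s by rewrite Es mem_cat mem_head orbT.
  have qV : q \in V := path_rV_sub px xV qin.
  have allVB : forall u, u \in q :: t -> u \in VB.
    move=> u; rewrite inE => /orP[/eqP->|ut']; first by rewrite in_setU qX.
    rewrite in_setU; apply/orP; right; rewrite inE; apply/existsP; exists (last q t).
    case: t Es alt pt ut lt ut' => [|c t] // Es alt /= /andP[qc pt] ut lt ut'.
    have cV : c \in V by case/and3P: qc.
    have tsub : forall v, v \in c :: t -> v \in W.
      move=> v vin; by rewrite /W in_setD (allP alt v vin) (path_rV_sub pt cV vin).
    rewrite lt lB /= -lt tsub ?mem_last //=.
    apply: (path_connect_last _ ut').
    apply: (@sub_in_path _ (fun u => u \in W) (rV V e)) pt.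
      by move=> d f dW fW /and3P[_ _ df]; rewrite /rV dW fW df.
    by apply/allP.
  have hp' : ABpath VB e X B q t.
    apply/and5P; split; [done | exact: allVB q (mem_head _ _) | | by rewrite lt | done].
    apply: (@sub_in_path _ (fun u => u \in VB) (rV V e)) pt.
      by move=> c d cVA dVA /and3P[_ _ cd]; rewrite /rV cVA dVA cd.
    by apply/allP => u; apply: allVB.
  have [y' y'in y'S] := sS q t hp'.
  by exists y' => //; rewrite Es mem_cat y'in orbT.
have [A0 [P1 [A0A A0k hP1 dP1]]] := IH VA e A X mA esym eirr AVA XVA sepA.
have [X0 [P2 [X0X X0k hP2 dP2]]] := IH VB e X B mB esym eirr XVB BVB sepB.
have X0E : X0 = X by apply/eqP; rewrite eqEcard X0X Xk X0k leqnn.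
rewrite X0E in hP2 dP2.
pose en := fun a => last a (P1 a).
have enX : forall a, a \in A0 -> en a \in X by move=> a' /hP1 /and5P[].
have enin : forall a, en a \in a :: P1 a by move=> a'; apply: mem_last.
have enI : {in A0 &, injective en}.
  move=> a1 a2 h1 h2 E; case: (eqVneq a1 a2) => // ne; exfalso.
  apply: (dP1 a1 a2 (en a1) h1 h2 ne (enin a1)); rewrite E; exact: enin.
have imX : en @: A0 = X.
  apply/eqP; rewrite eqEcard card_in_imset // A0k Xk leqnn andbT.
  by apply/subsetP => y /imsetP[a' a'A0 ->]; apply: enX.
have c1 : forall a y, a \in A0 -> y \in a :: P1 a -> y \in X -> y = en a.
  move=> a' y aA0 yin; rewrite -imX => /imsetP[a'' a''A0 Ey]; subst y.
  case: (eqVneq a' a'') => [->//|ne]; exfalso.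
  exact: (dP1 a' a'' (en a'') aA0 a''A0 ne yin (enin a'')).
have c2 : forall q y, q \in X -> y \in q :: P2 q -> y \in X -> y = q.
  move=> q y qX yin yX; case: (eqVneq y q) => // ne; exfalso.
  by apply: (dP2 q y y qX yX _ yin (mem_head _ _)); rewrite eq_sym.
have inVA : forall a y, a \in A0 -> y \in a :: P1 a -> y \in VA.
  by move=> a' y h; apply: ABpath_in (hP1 a' h).
have inVB : forall q y, q \in X -> y \in q :: P2 q -> y \in VB.
  by move=> q y h; apply: ABpath_in (hP2 q h).
exists A0, (fun a => P1 a ++ P2 (en a)); split => //.
- move=> a' aA0.
  have := hP1 a' aA0 => /and5P[a'A a'VA p1 l1 u1].
  have := hP2 (en a') (enX a' aA0) => /and5P[qX qVB p2 l2 u2].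
  apply/and5P; split => //.
  + exact: subsetP VAV a' a'VA.
  + rewrite cat_path; apply/andP; split.
      exact: (sub_path (rV_mono (e:=e) VAV) p1).
    exact: (sub_path (rV_mono (e:=e) VBV) p2).
  + by rewrite last_cat.
  + rewrite -cat_cons cat_uniq u1 /=; move: u2 => /= /andP[nin u2]; rewrite u2 andbT.
    apply/hasPn => y yP2; apply/negP => yA.
    have yin2 : y \in en a' :: P2 (en a') by rewrite inE yP2 orbT.
    have yX : y \in X := cap y (inVA a' y aA0 yA) (inVB _ y (enX a' aA0) yin2).
    have Ey := c1 a' y aA0 yA yX; rewrite Ey in yP2; by rewrite yP2 in nin.
- move=> a1 a2 y h1 h2 ne.
  have ene : en a1 != en a2 by apply: contra ne => /eqP/enI -> //.
  rewrite -!cat_cons !mem_cat => /orP[y1|y1] /orP[y2|y2].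
  + exact: (dP1 a1 a2 y h1 h2 ne).
  + have y2' : y \in en a2 :: P2 (en a2) by rewrite inE y2 orbT.
    have yX := cap y (inVA a1 y h1 y1) (inVB _ y (enX a2 h2) y2').
    have E1 := c1 a1 y h1 y1 yX; have E2 := c2 _ y (enX a2 h2) y2' yX.
    by rewrite -E1 E2 eqxx in ene.
  + have y1' : y \in en a1 :: P2 (en a1) by rewrite inE y1 orbT.
    have yX := cap y (inVA a2 y h2 y2) (inVB _ y (enX a1 h1) y1').
    have E1 := c1 a2 y h2 y2 yX; have E2 := c2 _ y (enX a1 h1) y1' yX.
    by rewrite -E2 E1 eqxx in ene.
  + apply: (dP2 (en a1) (en a2) y (enX a1 h1) (enX a2 h2) ene); by rewrite inE ?y1 ?y2 orbT.
Qed.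


Theorem menger_ind n : forall V e A B k, msr V e < n -> symmetric e -> irreflexive e ->
  A \subset V -> B \subset V -> (forall S, sep V e A B S -> k <= #|S|) ->
  linkage V e A B k.
Proof.
elim: n => // n IHn V e A B k mn esym eirr AV BV Hk.
have IH : forall V' e' A' B', msr V' e' < msr V e -> symmetric e' -> irreflexive e' ->
      A' \subset V' -> B' \subset V' ->
      (forall S, sep V' e' A' B' S -> k <= #|S|) -> linkage V' e' A' B' k.
  move=> V' e' A' B' h; apply: IHn; rewrite ltnS in mn; exact: leq_trans h mn.
case: (boolP [exists ab : T * T, rV V e ab.1 ab.2]) => [/existsP[[x y] /= exy] | noe].
  pose e' := fun a b => e a b && ~~ ((a == x) && (b == y) || (a == y) && (b == x)).
  have e'sym : symmetric e'.
    move=> a b; rewrite /e' esym.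
    by case: (a == x); case: (b == y); case: (a == y); case: (b == x).
  have e'irr : irreflexive e' by move=> a; rewrite /e' eirr.
  have e'e : subrel e' e by move=> a b /andP[].
  have xy : x != y.
    by apply/eqP => Exy; move: exy; rewrite /rV Exy eirr !andbF.
  have me : msr V e' < msr V e.
    rewrite /msr ltn_add2l; apply: proper_card; apply/properP; split.
      apply/subsetP => ab; rewrite !inE /rV => /and3P[-> -> /andP[]] //.
    exists (x, y); rewrite !inE /= ?exy //.
    by rewrite /rV /e' !eqxx /= !andbF.
  case: (classic (exists S, sep V e' A B S /\ #|S| < k)) => [[S [sS Sk]]|noS]; last first.
    have Hk' : forall S, sep V e' A B S -> k <= #|S|.
      move=> S sS; rewrite leqNgt; apply/negP => Sk; apply: noS; by exists S.
    have [A0 [P [? ? hP dP]]] := IH V e' A B me e'sym e'irr AV BV Hk'.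
    exists A0, P; split => // a aA0; exact: ABpath_sub e'e (hP a aA0).
  pose S' := S :&: V.
  have S'V : S' \subset V by apply: subsetIr.
  have sS' : sep V e' A B S'.
    move=> a s hp; have [z zin zS] := sS a s hp; exists z => //.
    by rewrite inE zS (ABpath_in hp zin).
  have S'k : #|S'| < k by apply: leq_ltn_trans (subset_leq_card (subsetIl S V)) Sk.
  have key : forall u a s, (u == x) || (u == y) -> ABpath V e A B a s ->
      u \notin a :: s -> ABpath V e' A B a s.
    move=> u a s hu /and5P[aA aV pa la ua] un; apply/and5P; split => //.
    apply: (@sub_in_path _ (fun c => c != u) (rV V e)) pa; last first.
      by apply/allP => c cin; apply/eqP => E; rewrite -E cin in un.
    move=> c d cu du /and3P[cV dV cd]; rewrite /rV cV dV /e' cd /=.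
    by case/orP: hu => /eqP Eu; subst u; rewrite (negbTE cu) (negbTE du) /= ?andbF.
  have sepU : forall u, (u == x) || (u == y) -> sep V e A B (u |: S').
    move=> u hu a s hp; case: (boolP (u \in a :: s)) => [uin|unin].
      by exists u; rewrite ?setU11.
    have [z zin zS] := sS' a s (key u a s hu hp unin).
    by exists z; rewrite ?setU1r.
  have cardU : forall u, (u == x) || (u == y) -> #|u |: S'| = k /\ u \notin S'.
    move=> u hu; have := Hk _ (sepU u hu); rewrite cardsU1.
    case: (u \in S') => /= h.
      by exfalso; move: S'k; rewrite ltnNge h.
    by split => //; apply/eqP; rewrite eqn_leq h andbT.
  have hx : (x == x) || (x == y) by rewrite eqxx.
  have hy : (y == x) || (y == y) by rewrite eqxx orbT.
  have [Xk xS] := cardU x hx.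
  have [Yk yS] := cardU y hy.
  have xV : x \in V by case/and3P: exy.
  have yV : y \in V by case/and3P: exy.
  have XV : x |: S' \subset V by rewrite subUset sub1set xV S'V.
  have YV : y |: S' \subset V by rewrite subUset sub1set yV S'V.
  have sX := sepU x hx.
  have sY := sepU y hy.
  case: (boolP ((x |: S' != A) && (x |: S' != B))) => [/andP[XA XB] | hX].
    exact: (caseI IH esym eirr AV BV Hk XV Xk sX XA XB).
  case: (boolP ((y |: S' != A) && (y |: S' != B))) => [/andP[YA YB] | hY].
    exact: (caseI IH esym eirr AV BV Hk YV Yk sY YA YB).
  have XY : x |: S' != y |: S'.
    apply/eqP => E; have : x \in y |: S' by rewrite -E setU11.
    by rewrite in_setU1 (negbTE xy) (negbTE xS).
  move: hX hY; rewrite !negb_and !negbK => /orP[/eqP XA|/eqP XB] /orP[/eqP YA|/eqP YB].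
  - by rewrite XA YA eqxx in XY.
  - exact: (twoedge exy xy xS yS XA YB Xk S'V).
  - have eyx : rV V e y x by rewrite /rV yV xV esym; case/and3P: exy.
    have yx : y != x by rewrite eq_sym.
    exact: (twoedge eyx yx yS xS YA XB Yk S'V).
  - by rewrite XB YB eqxx in XY.
have noe' : forall a b, ~~ rV V e a b.
  move=> a b; apply: contraNN noe => h; apply/existsP; by exists (a, b).
have sAB : sep V e A B (A :&: B).
  move=> x s /and5P[xA xV px lB _]; exists x; first exact: mem_head.
  case: s px lB => [|c s] /=; first by move=> _ xB; rewrite inE xA xB.
  by rewrite (negbTE (noe' x c)).
have [A0 [A0AB A0k]] := exists_sub_card (Hk _ sAB).
exists A0, (fun _ => [::]); split => //.
- exact: subset_trans A0AB (subsetIl _ _).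
- move=> a aA0; have := subsetP A0AB a aA0; rewrite inE => /andP[aA aB].
  by apply/and5P; split => //; exact: subsetP AV a aA.
- move=> a1 a2 y _ _ ne; rewrite !mem_seq1 => /eqP-> /eqP E.
  by rewrite E eqxx in ne.
Qed.

Theorem menger V e A B k : symmetric e -> irreflexive e ->
  A \subset V -> B \subset V -> (forall S, sep V e A B S -> k <= #|S|) ->
  linkage V e A B k.
Proof. exact: (@menger_ind (msr V e).+1). Qed.

End Menger.

Arguments Fadj : simpl never.

Section Fp.
Variable p : nat.
Hypothesis hp : 3 <= p.

Lemma p_gt0 : 0 < p. Proof. by apply: leq_trans hp. Qed.
Lemma p2_gt0 : 0 < 2 * p. Proof. by rewrite muln_gt0 p_gt0. Qed.

Definition U (i : nat) : Fvert p := uu (Ordinal (ltn_pmod i p_gt0)).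
Definition Vv (j : nat) : Fvert p := vv (Ordinal (ltn_pmod j p2_gt0)).
Definition Ww (j : nat) : Fvert p := ww (Ordinal (ltn_pmod j p2_gt0)).
Definition Z : Fvert p := zz.

Lemma Fadj_sym : symmetric (@Fadj p).
Proof. by move=> a b; rewrite /Fadj orbC. Qed.

Lemma succ_mod_neq n i : i < n -> 1 < n -> (i == (i + 1) %% n) = false.
Proof.
move=> iN n1; case: (ltnP (i + 1) n) => h.
  by rewrite modn_small //; apply/eqP; lia.
have E : i + 1 = n by lia.
by rewrite E modnn; apply/eqP; lia.
Qed.

Lemma Fadj_irr : irreflexive (@Fadj p).
Proof.
have h1 : 1 < p by apply: leq_trans hp.
have h2 : 1 < 2 * p by lia.
move=> [[[i|i]|i]|[]]; rewrite /Fadj /= ?orbb //.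
- by apply: succ_mod_neq.
- by apply: succ_mod_neq.
- by apply: succ_mod_neq.
Qed.

Lemma adjUU m n : (m + 1) %% p = n %% p -> @Fadj p (U m) (U n).
Proof. by move=> E; rewrite /Fadj /= modnDml E eqxx. Qed.
Lemma adjVV m n : (m + 1) %% (2 * p) = n %% (2 * p) -> @Fadj p (Vv m) (Vv n).
Proof. by move=> E; rewrite /Fadj /= modnDml E eqxx. Qed.
Lemma adjWW m n : (m + 1) %% (2 * p) = n %% (2 * p) -> @Fadj p (Ww m) (Ww n).
Proof. by move=> E; rewrite /Fadj /= modnDml E eqxx. Qed.
Lemma adjUV0 m n : (2 * m) %% (2 * p) = n %% (2 * p) -> @Fadj p (U m) (Vv n).
Proof. by move=> E; rewrite /Fadj /= muln_modr // modn_mod E eqxx !orbT. Qed.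
Lemma adjUV1 m n : (2 * m + 1) %% (2 * p) = n %% (2 * p) -> @Fadj p (U m) (Vv n).
Proof. by move=> E; rewrite /Fadj /= muln_modr // modnDml E eqxx !orbT. Qed.
Lemma adjUVm m n : (2 * m + (2 * p - 1)) %% (2 * p) = n %% (2 * p) -> @Fadj p (U m) (Vv n).
Proof.
move=> E; rewrite /Fadj /= muln_modr // -addnBA ?p2_gt0 // modnDml E eqxx //.
Qed.
Lemma adjVW0 m n : m %% (2 * p) = n %% (2 * p) -> @Fadj p (Vv m) (Ww n).
Proof. by move=> E; rewrite /Fadj /= E eqxx. Qed.
Lemma adjVW1 m n : (m + 1) %% (2 * p) = n %% (2 * p) -> @Fadj p (Vv m) (Ww n).
Proof. by move=> E; rewrite /Fadj /= modnDml E eqxx orbT. Qed.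
Lemma adjWZ m : @Fadj p (Ww m) Z.
Proof. by []. Qed.

Lemma Ueq m n : m %% p = n %% p -> U m = U n.
Proof. by move=> E; rewrite /U; congr (uu _); apply: val_inj. Qed.
Lemma Veq m n : m %% (2 * p) = n %% (2 * p) -> Vv m = Vv n.
Proof. by move=> E; rewrite /Vv; congr (vv _); apply: val_inj. Qed.
Lemma Weq m n : m %% (2 * p) = n %% (2 * p) -> Ww m = Ww n.
Proof. by move=> E; rewrite /Ww; congr (ww _); apply: val_inj. Qed.

Lemma UneqU m n : m %% p != n %% p -> U m != U n.
Proof. by move=> h; apply/eqP => E; move: h; case: E => ->; rewrite eqxx. Qed.
Lemma VneqV m n : m %% (2 * p) != n %% (2 * p) -> Vv m != Vv n.
Proof. by move=> h; apply/eqP => E; move: h; case: E => ->; rewrite eqxx. Qed.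
Lemma WneqW m n : m %% (2 * p) != n %% (2 * p) -> Ww m != Ww n.
Proof. by move=> h; apply/eqP => E; move: h; case: E => ->; rewrite eqxx. Qed.

Lemma neq_off d j a b : a < d -> b < d -> a != b -> (j + a) %% d != (j + b) %% d.
Proof. by move=> ad bd ab; rewrite eqn_modDl !modn_small. Qed.

Lemma eqmod0 x y d : x = y -> x %% d = y %% d. Proof. by move=> ->. Qed.
Lemma eqmodL x y d : x = y + d -> x %% d = y %% d. Proof. by move=> ->; rewrite modnDr. Qed.
Lemma eqmodR x y d : x + d = y -> x %% d = y %% d. Proof. by move=> <-; rewrite modnDr. Qed.
Lemma eqmodL2 x y d : x = y + d + d -> x %% d = y %% d. Proof. by move=> ->; rewrite !modnDr. Qed.
Lemma eqmodR2 x y d : x + d + d = y -> x %% d = y %% d. Proof. by move=> <-; rewrite !modnDr. Qed.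

Lemma neqUV m n : U m != Vv n. Proof. by []. Qed.
Lemma neqUW m n : U m != Ww n. Proof. by []. Qed.
Lemma neqUZ m : U m != Z. Proof. by []. Qed.
Lemma neqVW m n : Vv m != Ww n. Proof. by []. Qed.
Lemma neqVZ m : Vv m != Z. Proof. by []. Qed.
Lemma neqWZ m : Ww m != Z. Proof. by []. Qed.
Lemma neqVU m n : Vv m != U n. Proof. by []. Qed.
Lemma neqWU m n : Ww m != U n. Proof. by []. Qed.
Lemma neqZU m : Z != U m. Proof. by []. Qed.
Lemma neqWV m n : Ww m != Vv n. Proof. by []. Qed.
Lemma neqZV m : Z != Vv m. Proof. by []. Qed.
Lemma neqZW m : Z != Ww m. Proof. by []. Qed.

Lemma vert_cases (x : Fvert p) :
  [\/ exists i, x = U i, exists j, x = Vv j, exists j, x = Ww j | x = Z].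
Proof.
case: x => [[[i|j]|j]|[]]; last by constructor 4.
- by constructor 1; exists i; rewrite /U; congr (uu _); apply: val_inj; rewrite /= modn_small.
- by constructor 2; exists j; rewrite /Vv; congr (vv _); apply: val_inj; rewrite /= modn_small.
- by constructor 3; exists j; rewrite /Ww; congr (ww _); apply: val_inj; rewrite /= modn_small.
Qed.

End Fp.


Lemma path_step (T : eqType) (e : rel T) x y s : e x y -> path e y s -> path e x (y :: s).
Proof. by move=> h1 h2; rewrite /= h1 h2. Qed.
Lemma uniq_step (T : eqType) (x : T) s : x \notin s -> uniq s -> uniq (x :: s).
Proof. by move=> h1 h2; rewrite /= h1 h2. Qed.
Lemma notin_step (T : eqType) (x y : T) s : x != y -> x \notin s -> x \notin y :: s.
Proof. by move=> h1 h2; rewrite inE negb_or h1 h2. Qed.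

Ltac clean := repeat match goal with
  | H : is_true (has _ _) |- _ => clear H
  | H : is_true (_ \in _) |- _ => clear H
  | H : is_true (~~ (_ \in _)) |- _ => clear H
  | H : is_true (connect _ _ _) |- _ => clear H
  | H : _ \/ _ |- _ => clear H
  end.
Ltac lia' := clean; lia.
Ltac modtac := first [ apply: eqmod0; lia' | apply: eqmodL; lia' | apply: eqmodR; lia'
  | apply: eqmodL2; lia' | apply: eqmodR2; lia' ].
Ltac adjUVt := first [ apply: adjUV0; modtac | apply: adjUV1; modtac | apply: adjUVm; modtac ].
Ltac adjtac := match goal with
  | |- is_true (@Fadj _ (@U _ _ _) (@U _ _ _)) =>
      first [ apply: adjUU; modtac | rewrite Fadj_sym; apply: adjUU; modtac ]
  | |- is_true (@Fadj _ (@Vv _ _ _) (@Vv _ _ _)) =>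
      first [ apply: adjVV; modtac | rewrite Fadj_sym; apply: adjVV; modtac ]
  | |- is_true (@Fadj _ (@Ww _ _ _) (@Ww _ _ _)) =>
      first [ apply: adjWW; modtac | rewrite Fadj_sym; apply: adjWW; modtac ]
  | |- is_true (@Fadj _ (@U _ _ _) (@Vv _ _ _)) => adjUVt
  | |- is_true (@Fadj _ (@Vv _ _ _) (@U _ _ _)) => rewrite Fadj_sym; adjUVt
  | |- is_true (@Fadj _ (@Vv _ _ _) (@Ww _ _ _)) =>
      first [ apply: adjVW0; modtac | apply: adjVW1; modtac ]
  | |- is_true (@Fadj _ (@Ww _ _ _) (@Vv _ _ _)) =>
      rewrite Fadj_sym; first [ apply: adjVW0; modtac | apply: adjVW1; modtac ]
  | |- is_true (@Fadj _ (@Ww _ _ _) (@Z _)) => apply: adjWZ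
  | |- is_true (@Fadj _ (@Z _) (@Ww _ _ _)) => rewrite Fadj_sym; apply: adjWZ
  end.
Ltac neqfb := first [ assumption | rewrite eq_sym; assumption ].
Ltac neq1 := match goal with
  | |- context [@U _ _ _ == @U _ _ _] =>
      first [ apply: UneqU; apply: neq_off; lia' | neqfb ]
  | |- context [@Vv _ _ _ == @Vv _ _ _] =>
      first [ apply: VneqV; apply: neq_off; lia' | neqfb ]
  | |- context [@Ww _ _ _ == @Ww _ _ _] =>
      first [ apply: WneqW; apply: neq_off; lia' | neqfb ]
  | |- context [@U _ _ _ == @Vv _ _ _] => apply: neqUV
  | |- context [@U _ _ _ == @Ww _ _ _] => apply: neqUW
  | |- context [@U _ _ _ == @Z _] => apply: neqUZ
  | |- context [@Vv _ _ _ == @Ww _ _ _] => apply: neqVW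
  | |- context [@Vv _ _ _ == @Z _] => apply: neqVZ
  | |- context [@Ww _ _ _ == @Z _] => apply: neqWZ
  | |- context [@Vv _ _ _ == @U _ _ _] => apply: neqVU
  | |- context [@Ww _ _ _ == @U _ _ _] => apply: neqWU
  | |- context [@Z _ == @U _ _ _] => apply: neqZU
  | |- context [@Ww _ _ _ == @Vv _ _ _] => apply: neqWV
  | |- context [@Z _ == @Vv _ _ _] => apply: neqZV
  | |- context [@Z _ == @Ww _ _ _] => apply: neqZW
  end.
Ltac pathtac := repeat (apply: path_step; first adjtac); done.
Ltac notintac := repeat (apply: notin_step; first neq1); done.
Ltac uniqtac := repeat (apply: uniq_step; first notintac); done.


Section Conn.
Variable p : nat.
Hypothesis hp : 3 <= p.
Variable S : {set Fvert p}.
Hypothesis HS : #|S| < 5.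

Local Notation G := (delV (@Fadj p) S).
Local Notation CN x y := (connect G x y).
Local Notation U := (U hp).
Local Notation Vv := (Vv hp).
Local Notation Ww := (Ww hp).
Local Notation Z := (Z p).

Lemma G_sym : symmetric G.
Proof. by move=> a b; rewrite /delV Fadj_sym andbCA. Qed.

Lemma CN_sym x y : CN x y = CN y x.
Proof. exact: (sym_connect_sym G_sym). Qed.

Lemma cstep x y : x \notin S -> y \notin S -> @Fadj p x y -> CN x y.
Proof. by move=> xS yS xy; apply: connect1; rewrite /delV xS yS xy. Qed.

Lemma try_route x s t : x \notin S -> path (@Fadj p) x s ->
  (last x s \notin S -> CN (last x s) t) -> CN x t \/ has (fun y => y \in S) s.
Proof.
move=> xS ps cont; case: (boolP (has (fun y => y \in S) s)) => [h|h]; [by right | left].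
have allS : all (fun y => y \notin S) (x :: s) by rewrite /= xS all_predC.
apply: connect_trans (cont _); last by apply: (allP allS); apply: mem_last.
apply/connectP; exists s => //.
elim: s x xS ps allS {h cont} => //= y s IH x xS /andP[xy ps] /and3P[_ yS al].
by rewrite /delV xS yS xy /= IH // /= yS.
Qed.

Lemma uniq_cat_neq (s1 s2 : seq (Fvert p)) x y : uniq (s1 ++ s2) -> x \in s1 -> y \in s2 -> x != y.
Proof.
rewrite cat_uniq => /and3P[_ h _] xs ys; apply/eqP => E; move/hasPn: h => /(_ y ys).
by rewrite -E xs.
Qed.

Lemma five_card (s : seq (Fvert p)) : uniq s -> {subset s <= S} -> size s < 5.
Proof.
move=> us sS; apply: leq_ltn_trans HS; rewrite cardE; apply: uniq_leq_size => // x /sS.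
by rewrite mem_enum.
Qed.

Lemma groups5 (g1 g2 g3 g4 g5 : seq (Fvert p)) :
  uniq (g1 ++ g2 ++ g3 ++ g4 ++ g5) ->
  has (fun y => y \in S) g1 -> has (fun y => y \in S) g2 -> has (fun y => y \in S) g3 ->
  has (fun y => y \in S) g4 -> has (fun y => y \in S) g5 -> False.
Proof.
move=> u /hasP[y1 i1 S1] /hasP[y2 i2 S2] /hasP[y3 i3 S3] /hasP[y4 i4 S4] /hasP[y5 i5 S5].
have u2 : uniq (g2 ++ g3 ++ g4 ++ g5) by move: u; rewrite cat_uniq => /and3P[].
have u3 : uniq (g3 ++ g4 ++ g5) by move: u2; rewrite cat_uniq => /and3P[].
have u4 : uniq (g4 ++ g5) by move: u3; rewrite cat_uniq => /and3P[].
have n12 : y1 != y2 by apply: (uniq_cat_neq u); rewrite // !mem_cat ?i2 ?i3 ?i4 ?i5 ?orbT.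
have n13 : y1 != y3 by apply: (uniq_cat_neq u); rewrite // !mem_cat ?i2 ?i3 ?i4 ?i5 ?orbT.
have n14 : y1 != y4 by apply: (uniq_cat_neq u); rewrite // !mem_cat ?i2 ?i3 ?i4 ?i5 ?orbT.
have n15 : y1 != y5 by apply: (uniq_cat_neq u); rewrite // !mem_cat ?i2 ?i3 ?i4 ?i5 ?orbT.
have n23 : y2 != y3 by apply: (uniq_cat_neq u2); rewrite // !mem_cat ?i3 ?i4 ?i5 ?orbT.
have n24 : y2 != y4 by apply: (uniq_cat_neq u2); rewrite // !mem_cat ?i3 ?i4 ?i5 ?orbT.
have n25 : y2 != y5 by apply: (uniq_cat_neq u2); rewrite // !mem_cat ?i3 ?i4 ?i5 ?orbT.
have n34 : y3 != y4 by apply: (uniq_cat_neq u3); rewrite // !mem_cat ?i4 ?i5 ?orbT.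
have n35 : y3 != y5 by apply: (uniq_cat_neq u3); rewrite // !mem_cat ?i4 ?i5 ?orbT.
have n45 : y4 != y5 by apply: (uniq_cat_neq u4); rewrite // !mem_cat ?i5 ?orbT.
have : size [:: y1; y2; y3; y4; y5] < 5.
  apply: five_card; first by rewrite /= !inE !negb_or n12 n13 n14 n15 n23 n24 n25 n34 n35 n45.
  move=> y; rewrite !inE ?orbF.
  by move=> /orP[/eqP->//|/orP[/eqP->//|/orP[/eqP->//|/orP[/eqP->//|/eqP->//]]]].
by [].
Qed.


Lemma half_cases (j : nat) : exists i, j = 2 * i \/ j = 2 * i + 1.
Proof. exists (j %/ 2); lia. Qed.

Lemma CW (zS : Z \notin S) m : Ww m \notin S -> CN (Ww m) Z.
Proof. by move=> wS; apply: cstep => //; apply: adjWZ. Qed.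

Lemma CV (zS : Z \notin S) j : Vv j \notin S -> CN (Vv j) Z.
Proof.
have E : Vv j = Vv (j + 0) by rewrite addn0.
rewrite E => vS.
have cw := CW zS.
have [//|h0] : CN (Vv (j + 0)) Z \/ has (fun y => y \in S) [:: Ww (j + 0)].
  by apply: try_route => //; [pathtac | rewrite /=; apply: cw].
have [//|h1] : CN (Vv (j + 0)) Z \/ has (fun y => y \in S) [:: Ww (j + 1)].
  by apply: try_route => //; [pathtac | rewrite /=; apply: cw].
have [//|h2] : CN (Vv (j + 0)) Z \/ has (fun y => y \in S) [:: Vv (j + 1); Ww (j + 2)].
  by apply: try_route => //; [pathtac | rewrite /=; apply: cw].
have [//|h3] : CN (Vv (j + 0)) Z \/
    has (fun y => y \in S) [:: Vv (j + (2 * p - 1)); Ww (j + (2 * p - 1))].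
  by apply: try_route => //; [pathtac | rewrite /=; apply: cw].
have [i [Ej|Ej]] := half_cases j.
  have [//|h4] : CN (Vv (j + 0)) Z \/
      has (fun y => y \in S) [:: U (i + 0); U (i + 1); Vv (j + 3); Ww (j + 4)].
    by apply: try_route => //; [pathtac | rewrite /=; apply: cw].
  by exfalso; apply: (groups5 _ h0 h1 h2 h3 h4); uniqtac.
have [//|h4] : CN (Vv (j + 0)) Z \/
    has (fun y => y \in S) [:: U (i + 1); Vv (j + 2); Ww (j + 3)].
  by apply: try_route => //; [pathtac | rewrite /=; apply: cw].
by exfalso; apply: (groups5 _ h0 h1 h2 h3 h4); uniqtac.
Qed.


Lemma CU (zS : Z \notin S) i : U i \notin S -> CN (U i) Z.
Proof.
have E : U i = U (i + 0) by rewrite addn0.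
rewrite E => uS.
have cv := CV zS.
have [j Ej] : exists j, j = 2 * i by exists (2 * i).
have [//|h0] : CN (U (i + 0)) Z \/ has (fun y => y \in S) [:: Vv (j + (2 * p - 1))].
  by apply: try_route => //; [pathtac | rewrite /=; apply: cv].
have [//|h1] : CN (U (i + 0)) Z \/ has (fun y => y \in S) [:: Vv (j + 0)].
  by apply: try_route => //; [pathtac | rewrite /=; apply: cv].
have [//|h2] : CN (U (i + 0)) Z \/ has (fun y => y \in S) [:: Vv (j + 1)].
  by apply: try_route => //; [pathtac | rewrite /=; apply: cv].
have [//|h3] : CN (U (i + 0)) Z \/ has (fun y => y \in S) [:: U (i + 1); Vv (j + 2)].
  by apply: try_route => //; [pathtac | rewrite /=; apply: cv].
have [//|h4] : CN (U (i + 0)) Z \/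
    has (fun y => y \in S) [:: U (i + (p - 1)); Vv (j + (2 * p - 2))].
  by apply: try_route => //; [pathtac | rewrite /=; apply: cv].
by exfalso; apply: (groups5 _ h0 h1 h2 h3 h4); uniqtac.
Qed.

Lemma ring_full (R : nat -> Fvert p) : (forall m, @Fadj p (R m) (R m.+1)) ->
  (forall m, R m \notin S) -> forall m, CN (R m) (R 0).
Proof.
move=> adj nS; elim=> [|m IH]; first exact: connect0.
rewrite CN_sym in IH; rewrite CN_sym; apply: connect_trans IH _.
by apply: cstep; rewrite ?nS ?adj.
Qed.

Lemma ring_minus1 (R : nat -> Fvert p) d c : 1 < d ->
  (forall m, @Fadj p (R m) (R m.+1)) ->
  (forall x y, x %% d = y %% d -> R x = R y) ->
  (forall x y, R x = R y -> x %% d = y %% d) ->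
  R c \in S -> (forall m, R m \in S -> R m = R c) ->
  forall m, R m \notin S -> CN (R m) (R (c %% d + 1)).
Proof.
move=> d1 adj Req Rinj cS uniqS.
have d0 : 0 < d by apply: ltnW.
have c0d : c %% d < d by rewrite ltn_pmod.
move: c0d; set c0 := c %% d => c0d.
have nS : forall t, t < d.-1 -> R (c0 + 1 + t) \notin S.
  move=> t tl; apply/negP => /uniqS /Rinj; rewrite -/c0.
  case: (ltnP (c0 + 1 + t) d) => h.
    by rewrite modn_small //; lia.
  have -> : c0 + 1 + t = (c0 + 1 + t - d) + d by lia.
  by rewrite modnDr modn_small; lia.
have path_t : forall t, t < d.-1 -> CN (R (c0 + 1)) (R (c0 + 1 + t)).
  elim=> [|t IH] tl; first by rewrite addn0; apply: connect0.
  apply: connect_trans (IH (ltnW tl)) _.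
  apply: (cstep (nS t (ltnW tl)) (nS t.+1 tl)).
  by rewrite [c0 + 1 + t.+1]addnS; apply: adj.
move=> m mS.
have Em : R m = R (m %% d) by apply: Req; rewrite modn_mod.
have m0d : m %% d < d by rewrite ltn_pmod.
move: Em m0d; set m0 := m %% d => Em m0d.
have m0c : m0 != c0.
  apply/eqP => E; move: mS; rewrite Em E.
  have -> : R c0 = R c by apply: Req; rewrite modn_mod.
  by rewrite cS.
rewrite CN_sym Em.
case: (ltnP c0 m0) => h.
  have := path_t (m0 - c0 - 1) _; rewrite (_ : c0 + 1 + (m0 - c0 - 1) = m0) //; last by lia.
  by apply; lia.
have := path_t (d - c0 - 1 + m0) _.
rewrite (Req (c0 + 1 + (d - c0 - 1 + m0)) m0); last first.
  rewrite (_ : c0 + 1 + (d - c0 - 1 + m0) = m0 + d) ?modnDr //; lia.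
by apply; move: m0c; rewrite neq_ltn => /orP[] ?; lia.
Qed.

Lemma hub_all h : (forall i, U i \notin S -> CN (U i) h) ->
  (forall j, Vv j \notin S -> CN (Vv j) h) -> (forall j, Ww j \notin S -> CN (Ww j) h) ->
  (Z \notin S -> CN Z h) -> forall x, x \notin S -> CN x h.
Proof.
move=> hU hV hW hZ x; case: (vert_cases hp x) => [[i ->]|[j ->]|[j ->]|->] //.
- exact: hU.
- exact: hV.
- exact: hW.
Qed.

Lemma main_conn : exists h, forall x, x \notin S -> CN x h.
Proof.
case: (boolP (Z \in S)) => zS; last first.
  exists Z; apply: hub_all; [exact: CU | exact: CV | exact: CW | move=> _; exact: connect0].
have Zg : has (fun y => y \in S) [:: Z] by rewrite /= zS.
case: (classic (exists a, U a \in S)) => [[a aS]|noU]; last first.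
  have nU : forall m, U m \notin S by move=> m; apply/negP => h; apply: noU; exists m.
  have hu : forall m, CN (U m) (U 0) by apply: ring_full => // m; adjtac.
  have hv : forall j, Vv j \notin S -> CN (Vv j) (U 0).
    move=> j vS; have [i [Ej|Ej]] := half_cases j.
      by apply: connect_trans (hu i); apply: cstep; rewrite ?nU //; adjtac.
    by apply: connect_trans (hu i); apply: cstep; rewrite ?nU //; adjtac.
  exists (U 0); apply: hub_all => //; last by rewrite zS.
  move=> m; have E : Ww m = Ww (m + 0) by rewrite addn0.
  rewrite E => wS.
  have [//|h1] : CN (Ww (m + 0)) (U 0) \/ has (fun y => y \in S) [:: Vv (m + 0)].
    by apply: try_route => //; [pathtac | rewrite /=; apply: hv].
  have [//|h2] : CN (Ww (m + 0)) (U 0) \/ has (fun y => y \in S) [:: Vv (m + (2 * p - 1))].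
    by apply: try_route => //; [pathtac | rewrite /=; apply: hv].
  have [//|h3] : CN (Ww (m + 0)) (U 0) \/ has (fun y => y \in S) [:: Ww (m + 1); Vv (m + 1)].
    by apply: try_route => //; [pathtac | rewrite /=; apply: hv].
  have [//|h4] : CN (Ww (m + 0)) (U 0) \/
      has (fun y => y \in S) [:: Ww (m + (2 * p - 1)); Vv (m + (2 * p - 2))].
    by apply: try_route => //; [pathtac | rewrite /=; apply: hv].
  by exfalso; apply: (groups5 _ Zg h1 h2 h3 h4); uniqtac.
have Ug : has (fun y => y \in S) [:: U a] by rewrite /= aS.
case: (classic (exists b, Vv b \in S)) => [[b bS]|noV]; last first.
  have nV : forall m, Vv m \notin S by move=> m; apply/negP => h; apply: noV; exists m.
  have hv : forall m, CN (Vv m) (Vv 0) by apply: ring_full => // m; adjtac.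
  exists (Vv 0); apply: hub_all => //; last by rewrite zS.
    by move=> i uS; apply: connect_trans (hv (2 * i)); apply: cstep; rewrite ?nV //; adjtac.
  by move=> j wS; apply: connect_trans (hv j); apply: cstep; rewrite ?nV //; adjtac.
have Vg : has (fun y => y \in S) [:: Vv b] by rewrite /= bS.
case: (classic (exists c, Ww c \in S)) => [[c cS]|noW]; last first.
  have nW : forall m, Ww m \notin S by move=> m; apply/negP => h; apply: noW; exists m.
  have hw : forall m, CN (Ww m) (Ww 0) by apply: ring_full => // m; adjtac.
  have hv : forall j, Vv j \notin S -> CN (Vv j) (Ww 0).
    by move=> j vS; apply: connect_trans (hw j); apply: cstep; rewrite ?nW //; adjtac.
  exists (Ww 0); apply: hub_all => //; last by rewrite zS.
  move=> i; have E : U i = U (i + 0) by rewrite addn0.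
  rewrite E => uS.
  have [j Ej] : exists j, j = 2 * i by exists (2 * i).
  have [//|h1] : CN (U (i + 0)) (Ww 0) \/ has (fun y => y \in S) [:: Vv (j + 0)].
    by apply: try_route => //; [pathtac | rewrite /=; apply: hv].
  have [//|h2] : CN (U (i + 0)) (Ww 0) \/ has (fun y => y \in S) [:: Vv (j + 1)].
    by apply: try_route => //; [pathtac | rewrite /=; apply: hv].
  have [//|h3] : CN (U (i + 0)) (Ww 0) \/ has (fun y => y \in S) [:: Vv (j + (2 * p - 1))].
    by apply: try_route => //; [pathtac | rewrite /=; apply: hv].
  by exfalso; apply: (groups5 _ Zg Ug h1 h2 h3); uniqtac.
have uW : forall m, Ww m \in S -> Ww m = Ww c.
  move=> m mS; apply/eqP; apply/negPn/negP => ne.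
  have Wg : has (fun y => y \in S) [:: Ww c] by rewrite /= cS.
  have Mg : has (fun y => y \in S) [:: Ww m] by rewrite /= mS.
  by apply: (groups5 _ Zg Ug Vg Wg Mg); uniqtac.
have uV : forall m, Vv m \in S -> Vv m = Vv b.
  move=> m mS; apply/eqP; apply/negPn/negP => ne.
  have Wg : has (fun y => y \in S) [:: Ww c] by rewrite /= cS.
  have Mg : has (fun y => y \in S) [:: Vv m] by rewrite /= mS.
  by apply: (groups5 _ Zg Ug Vg Wg Mg); uniqtac.
have hw : forall m, Ww m \notin S -> CN (Ww m) (Ww (c %% (2 * p) + 1)).
  apply: ring_minus1 => //.
  - by have := p2_gt0 hp; lia.
  - by move=> m; adjtac.
  - exact: Weq.
  - by move=> x y E; apply/eqP; move: E => /eqP; apply: contraLR; apply: WneqW.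
have hv : forall j, Vv j \notin S -> CN (Vv j) (Ww (c %% (2 * p) + 1)).
  move=> j; have E : Vv j = Vv (j + 0) by rewrite addn0.
  rewrite E => vS.
  case: (boolP (Ww (j + 0) \in S)) => w0.
    case: (boolP (Ww (j + 1) \in S)) => w1.
      have := uW _ w1; rewrite -(uW _ w0) => /eqP.
      have : Ww (j + 1) != Ww (j + 0) by neq1.
      by move/negbTE->.
    by apply: connect_trans (hw _ w1); apply: cstep => //; adjtac.
  by apply: connect_trans (hw _ w0); apply: cstep => //; adjtac.
exists (Ww (c %% (2 * p) + 1)); apply: hub_all => //; last by rewrite zS.
move=> i; have E : U i = U (i + 0) by rewrite addn0.
rewrite E => uS.
have [j Ej] : exists j, j = 2 * i by exists (2 * i).
case: (boolP (Vv (j + 0) \in S)) => v0.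
  case: (boolP (Vv (j + 1) \in S)) => v1.
    have := uV _ v1; rewrite -(uV _ v0) => /eqP.
    have : Vv (j + 1) != Vv (j + 0) by neq1.
    by move/negbTE->.
  by apply: connect_trans (hv _ v1); apply: cstep => //; adjtac.
by apply: connect_trans (hv _ v0); apply: cstep => //; adjtac.
Qed.

End Conn.

Lemma delV_path_notin (T : finType) (e : rel T) (S : {set T}) x s :
  path (delV e S) x s -> x \notin S -> forall y, y \in x :: s -> y \notin S.
Proof.
elim: s x => [|z s IH] x /=; first by move=> _ xS y; rewrite mem_seq1 => /eqP->.
move=> /andP[/and3P[_ zS _] pz] xS y; rewrite inE => /orP[/eqP->//|]; exact: IH.
Qed.

Lemma delV_path_rV (T : finType) (e : rel T) (S V : {set T}) x s :
  path (delV e S) x s -> (forall y, y \in x :: s -> y \in V) -> path (rV V e) x s.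
Proof.
elim: s x => [|z s IH] x //= /andP[/and3P[_ _ xz] pz] hV.
rewrite /rV hV ?mem_head // hV ?inE ?eqxx ?orbT // xz /=.
by apply: IH => // y yin; apply: hV; rewrite inE yin orbT.
Qed.

Lemma conn5 p (hp : 3 <= p) (S : {set Fvert p}) : #|S| < 5 ->
  forall x y, x \notin S -> y \notin S -> connect (delV (@Fadj p) S) x y.
Proof.
move=> HS x y xS yS; have [h Hh] := main_conn hp HS.
apply: connect_trans (Hh x xS) _.
by rewrite (sym_connect_sym (G_sym S)); apply: Hh.
Qed.

Lemma card_Fvert p (hp : 3 <= p) : 5 < #|Fvert p|.
Proof. rewrite /Fvert !card_sum card_unit !card_ord; lia. Qed.

Lemma partC p (hp : 3 <= p) (M1 M2 : {set Fvert p}) :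
  #|M1| = #|M2| -> #|M1| <= 5 ->
  exists (P : Fvert p -> seq (Fvert p)) (en : Fvert p -> Fvert p),
    (forall m, m \in M1 -> en m \in M2 /\ is_path (@Fadj p) m (P m) (en m)) /\
    (forall m1 m2 x, m1 \in M1 -> m2 \in M1 -> m1 != m2 ->
       x \in m1 :: P m1 -> x \in m2 :: P m2 -> False).
Proof.
move=> E12 M5.
have Hk : forall T, sep setT (@Fadj p) M1 M2 T -> #|M1| <= #|T|.
  move=> T sT; rewrite leqNgt; apply/negP => lt.
  have [m1 m1M m1T] : exists2 m1, m1 \in M1 & m1 \notin T.
    case: (boolP (M1 \subset T)) => [sub|/subsetPn[m ? ?]]; last by exists m.
    by move: lt; rewrite ltnNge subset_leq_card.
  have [m2 m2M m2T] : exists2 m2, m2 \in M2 & m2 \notin T.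
    case: (boolP (M2 \subset T)) => [sub|/subsetPn[m ? ?]]; last by exists m.
    by move: lt; rewrite E12 ltnNge subset_leq_card.
  have T5 : #|T| < 5 by apply: leq_trans lt M5.
  have /connectP[s ps Em2] := conn5 hp T5 m1T m2T.
  move: m2M; rewrite Em2; case: (shortenP ps) => s' ps' us' _ lM2.
  have hp' : ABpath setT (@Fadj p) M1 M2 m1 s'.
    apply/and5P; split; [done | by rewrite in_setT | | done | done].
    by apply: (delV_path_rV ps') => y _; rewrite in_setT.
  have [y yin yT] := sT m1 s' hp'.
  by move: (delV_path_notin ps' m1T yin); rewrite yT.
have [A0 [P [A0M A0k hP dP]]] := menger (Fadj_sym (p:=p)) (Fadj_irr hp)
  (subsetT M1) (subsetT M2) Hk.
have A0E : A0 = M1 by apply/eqP; rewrite eqEcard A0M A0k leqnn.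
subst A0.
exists P, (fun m => last m (P m)); split => // m mM.
have /and5P[_ _ pm lm um] := hP m mM; split => //.
apply/and3P; split => //.
by apply: sub_path pm => a b /and3P[].
Qed.

Lemma fan p (hp : 3 <= p) (u : Fvert p) (M : {set Fvert p}) :
  u \notin M -> #|M| <= 5 ->
  exists Q : Fvert p -> seq (Fvert p),
    (forall m, m \in M -> is_path (@Fadj p) u (Q m) m) /\
    (forall m1 m2 x, m1 \in M -> m2 \in M -> m1 != m2 ->
       x \in u :: Q m1 -> x \in u :: Q m2 -> x = u).
Proof.
move=> uM M5.
pose V := ~: [set u].
pose A := [set a | @Fadj p u a].
have inV : forall y, (y \in V) = (y != u) by move=> y; rewrite !inE.
have AV : A \subset V.
  apply/subsetP => a; rewrite inE inV => ua; apply/eqP => E.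
  by move: ua; rewrite E Fadj_irr.
have MV : M \subset V.
  by apply/subsetP => m mM; rewrite inV; apply/eqP => E; rewrite -E mM in uM.
have Hk : forall T, sep V (@Fadj p) A M T -> #|M| <= #|T|.
  move=> T sT; rewrite leqNgt; apply/negP => lt.
  pose T' := T :\ u.
  have sT' : sep V (@Fadj p) A M T'.
    move=> x s hx; have [y yin yT] := sT x s hx; exists y => //.
    by rewrite in_setD1 yT andbT -inV (ABpath_in hx yin).
  have lt' : #|T'| < #|M| by apply: leq_ltn_trans (subset_leq_card (subD1set T u)) lt.
  have [m mM mT] : exists2 m, m \in M & m \notin T'.
    case: (boolP (M \subset T')) => [sub|/subsetPn[m ? ?]]; last by exists m.
    by move: lt'; rewrite ltnNge subset_leq_card.
  have uT : u \notin T' by rewrite in_setD1 eqxx.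
  have T5 : #|T'| < 5 by apply: leq_trans lt' M5.
  have /connectP[s ps Em] := conn5 hp T5 uT mT.
  move: mM; rewrite Em; case: (shortenP ps) => s' ps' us' _.
  case: s' ps' us' => [|a s''] ps' us' /=; first by rewrite (negbTE uM).
  move=> lM.
  move: ps' => /= /andP[/and3P[_ aT ua] ps''].
  move: us' => /= /andP[unin us''].
  have hx : ABpath V (@Fadj p) A M a s''.
    apply/and5P; split => //.
    - by rewrite inE.
    - by rewrite inV; apply/eqP => E; rewrite E inE eqxx in unin.
    - apply: delV_path_rV ps'' _ => y yin; rewrite inV; apply/eqP => E.
      by rewrite -E yin in unin.
  have [y yin yT] := sT' a s'' hx.
  by move: (delV_path_notin ps'' aT yin); rewrite yT.
have [A0 [P [A0A A0k hP dP]]] := menger (Fadj_sym (p:=p)) (Fadj_irr hp) AV MV Hk.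
pose en := fun a => last a (P a).
have enM : forall a, a \in A0 -> en a \in M by move=> a /hP /and5P[].
have enI : {in A0 &, injective en}.
  move=> a1 a2 h1 h2 E; case: (eqVneq a1 a2) => // ne; exfalso.
  apply: (dP a1 a2 (en a1) h1 h2 ne (mem_last _ _)); rewrite E; exact: mem_last.
have imM : en @: A0 = M.
  apply/eqP; rewrite eqEcard card_in_imset // A0k leqnn andbT.
  by apply/subsetP => y /imsetP[a aA0 ->]; apply: enM.
pose Q := fun m => if [pick a in A0 | en a == m] is Some a then a :: P a else [::].
have Qm : forall m, m \in M -> exists a, [/\ a \in A0, en a = m & Q m = a :: P a].
  move=> m; rewrite /Q; case: pickP => [a /andP[aA0 /eqP ea] _ | none].
    by exists a.
  rewrite -imM => /imsetP[a aA0 ea]; move: (none a); rewrite aA0 ea eqxx.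
  by [].
exists Q; split.
  move=> m mM; have [a [aA0 ea ->]] := Qm m mM.
  have hpa := hP a aA0; move: (hpa) => /and5P[_ _ pa la ua].
  have aA : a \in A := subsetP A0A a aA0.
  apply/and3P; split.
  - rewrite /= (_ : @Fadj p u a) /=; last by move: aA; rewrite inE.
    by apply: sub_path pa => x y /and3P[].
  - by rewrite /= -/(en a) ea.
  - rewrite cons_uniq ua andbT; apply/negP => uin.
    by move: (ABpath_in hpa uin); rewrite inV eqxx.
move=> m1 m2 x m1M m2M ne.
have [a1 [a1A0 e1 ->]] := Qm m1 m1M.
have [a2 [a2A0 e2 ->]] := Qm m2 m2M.
have a12 : a1 != a2 by apply: contra ne => /eqP E; rewrite -e1 -e2 E.
rewrite inE => /orP[/eqP->//|x1]; rewrite inE => /orP[/eqP->//|x2].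
by exfalso; apply: (dP a1 a2 x a1A0 a2A0 a12 x1 x2).
Qed.

Theorem mainTheorem4 (p : nat) (hp : 3 <= p) :
  (* (a) *)
  k_connected (@Fadj p) 5 /\
  (* (b) fan from any vertex u to any M ⊆ V(C), |M| <= 5 *)
  (forall (u : Fvert p) (M : {set Fvert p}),
     M \subset [set x | onC x] -> #|M| <= 5 ->
     exists P : Fvert p -> seq (Fvert p),
       (forall m, m \in M -> is_path (@Fadj p) u (P m) m) /\
       (forall m1 m2 x, m1 \in M -> m2 \in M -> m1 != m2 ->
          x \in u :: P m1 -> x \in u :: P m2 -> x = u)) /\
  (* (c) linkage between M1, M2 ⊆ V(C), |M1| = |M2| <= 5 *)
  (forall M1 M2 : {set Fvert p},
     M1 \subset [set x | onC x] -> M2 \subset [set x | onC x] ->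
     #|M1| = #|M2| -> #|M1| <= 5 ->
     exists (P : Fvert p -> seq (Fvert p)) (en : Fvert p -> Fvert p),
       (forall m, m \in M1 -> en m \in M2 /\ is_path (@Fadj p) m (P m) (en m)) /\
       (forall m1 m2 x, m1 \in M1 -> m2 \in M1 -> m1 != m2 ->
          x \in m1 :: P m1 -> x \in m2 :: P m2 -> False)).
Proof.
split; first by split; [exact: card_Fvert | move=> S HS x y; exact: conn5].
split; last by move=> M1 M2 _ _; apply: partC.
move=> u M _ M5.
case: (boolP (u \in M)) => uM; last exact: fan.
have uM' : u \notin M :\ u by rewrite in_setD1 eqxx.
have M5' : #|M :\ u| <= 5 by apply: leq_trans (subset_leq_card (subD1set M u)) M5.
have [Q [hQ dQ]] := fan hp uM' M5'.
exists (fun m => if m == u then [::] else Q m); split.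
  move=> m mM; case: (eqVneq m u) => [->|mu].
    by rewrite /is_path /= eqxx.
  by apply: hQ; rewrite in_setD1 mu.
move=> m1 m2 x m1M m2M ne.
case: (eqVneq m1 u) => [_|m1u]; first by rewrite mem_seq1 => /eqP.
case: (eqVneq m2 u) => [_|m2u]; first by move=> _; rewrite mem_seq1 => /eqP.
by apply: dQ; rewrite ?in_setD1 ?m1u ?m2u.
Qed.
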